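(* Let $D=(V,E)$ be a finite connected graph with weights $\mathbf c_e\ge1$, and let $H$ be a positive height function on $D$. Let $h$ be drawn randomly among height functions with $|h|=H$, with probabilities proportional to $W(h)$ (resp. among those additionally satisfying $\mathrm{sign}(h)=+1$ on a given $S\subset V$). Let $B$ be an independent Bernoulli percolation with parameters $p_e=1-1/\mathbf c_e$ and $\omega$ the percolation defined from $(h,B)$ as below. Then: (1) the marginal law of $\omega$ is ${\sf P}^D_{\rm FK}[\,\cdot\mid E_{\rm fix}(H)\subset\omega]$ (resp. ${\sf P}^{D,+}_{\rm FK}[\,\cdot\mid E_{\rm fix}(H)\subset\omega]$, wired on $S$); (2) given $H$ and $\omega$, the conditional law of $\mathrm{sign}(h)$ is constant on each connected component of $(V,\omega)$, with independent fair coin flips on different components (resp. except that the sign is $+1$ on components intersecting $S$).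
   Context: $\mathbb Z_{\rm odd}=2\mathbb Z+1$. A height function on $D$ is $h:V\to\mathbb Z_{\rm odd}$ with $|h(v)-h(w)|\le2$ for all edges $\langle v,w\rangle$; it is positive if $h>0$. Weight: $W(h)=\prod_{e=\langle v,w\rangle\in E}\mathbf c_e^{\mathbb 1\{h(v)=h(w)\}}$. Fixed-sign edges: $E_{\rm fix}(H)=\{\langle v,w\rangle\in E:\max(H(v),H(w))\ge3\}$. Percolations: $B\in\{0,1\}^E$ has independent coordinates with $B_e=1$ with probability $p_e=1-1/\mathbf c_e$, independent of $h$; $\omega_{\langle v,w\rangle}=1$ if $\max(|h(v)|,|h(w)|)\ge3$, $\omega_{\langle v,w\rangle}=B_{\langle v,w\rangle}$ if $h(v)=h(w)\in\{\pm1\}$, and $\omega_{\langle v,w\rangle}=0$ if $\{h(v),h(w)\}=\{-1,1\}$. FK-Ising: ${\sf P}^D_{\rm FK}[\varpi]\propto 2^{c(\varpi)}\prod_{e}p_e^{\mathbb 1\{e\in\varpi\}}(1-p_e)^{\mathbb 1\{e\notin\varpi\}}$ for $\varpi\subset E$, with $c(\varpi)$ the number of connected components of $(V,\varpi)$; ${\sf P}^{D,+}_{\rm FK}$ (wired on $S$) is the same model on the graph where all vertices of $S$ are identified. *)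

(* Defs.v *)
From HB Require Import structures.
From mathcomp Require Import all_boot all_order all_algebra.
Set Implicit Arguments. Unset Strict Implicit. Unset Printing Implicit Defensive.
Import Order.TTheory GRing.Theory Num.Theory.
Local Open Scope ring_scope.

Section Graph.
Variables (V E : finType) (src dst : E -> V).

Definition endsb (e : E) (x y : V) : bool :=
  ((src e == x) && (dst e == y)) || ((src e == y) && (dst e == x)).

Definition simple_graph : Prop :=
  (forall e, src e != dst e) /\
  (forall e e', endsb e' (src e) (dst e) -> e = e').

Definition adj : rel V := fun x y => [exists e, endsb e x y].
Definition connected_graph : Prop := forall x y, connect adj x y.

Definition open_adj (w : {set E}) : rel V := fun x y => [exists e in w, endsb e x y].
Definition oconn (w : {set E}) : rel V := connect (open_adj w).

Definition ncomp (w : {set E}) : nat := #|[set [set y | oconn w x y] | x : V]|.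

Definition touchS (S : {set V}) (w : {set E}) (x : V) : bool :=
  [exists s in S, oconn w x s].

(* connectivity after identifying all vertices of S *)
Definition wconn (S : {set V}) (w : {set E}) : rel V :=
  fun x y => oconn w x y || (touchS S w x && touchS S w y).

Definition ncomp_wired (S : {set V}) (w : {set E}) : nat :=
  #|[set [set y | wconn S w x y] | x : V]|.

Definition is_height (h : V -> int) : bool :=
  [forall v, odd `|h v|%N] && [forall e, `|h (src e) - h (dst e)| <= 2].
Definition positive_height (H : V -> int) : bool :=
  is_height H && [forall v, 0 < H v].

(* the function with |h| = H and sign(h) = sigma  (true = +1) *)
Definition signed (H : V -> int) (sigma : {ffun V -> bool}) : V -> int :=
  fun v => if sigma v then H v else - H v.

Definition E_fix (H : V -> int) : {set E} :=
  [set e | 3 <= Num.max (H (src e)) (H (dst e))].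

Definition omega (H : V -> int) (sigma : {ffun V -> bool}) (B : {set E}) : {set E} :=
  [set e | let a := signed H sigma (src e) in let b := signed H sigma (dst e) in
           if 3 <= Num.max `|a| `|b| then true
           else if (a == b) && (`|a| == 1) then e \in B
           else false].

(* law of sign(h) given omega: independent fair coin per component,
   i.e. uniform over sign assignments constant on components, and +1 on
   components meeting S *)
Definition coin_set (S : {set V}) (w : {set E}) : {set {ffun V -> bool}} :=
  [set sigma : {ffun V -> bool} |
     [forall x, forall y, oconn w x y ==> (sigma x == sigma y)] &&
     [forall x, touchS S w x ==> sigma x]].

Variable R : realFieldType.

Definition coin_law (S : {set V}) (w : {set E}) (sigma : {ffun V -> bool}) : R :=
  if sigma \in coin_set S w then (#|coin_set S w|%:R)^-1 else 0.

Definition pe (c : E -> R) (e : E) : R := 1 - (c e)^-1.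

Definition bern_w (p : E -> R) (B : {set E}) : R :=
  \prod_(e : E) (if e \in B then p e else 1 - p e).

Definition FK_weight (nc : {set E} -> nat) (p : E -> R) (w : {set E}) : R :=
  2%:R ^+ nc w * bern_w p w.
Definition FK_prob nc p (w : {set E}) : R :=
  FK_weight nc p w / \sum_(w' : {set E}) FK_weight nc p w'.
Definition FK_event_prob nc p (A : {set E}) : R :=
  \sum_(w' : {set E} | A \subset w') FK_prob nc p w'.
Definition FK_cond nc p (A : {set E}) (w : {set E}) : R :=
  (if A \subset w then FK_prob nc p w else 0) / FK_event_prob nc p A.

Definition W (c : E -> R) (h : V -> int) : R :=
  \prod_(e : E) (if h (src e) == h (dst e) then c e else 1).

Definition admissible (H : V -> int) (S : {set V}) (sigma : {ffun V -> bool}) : bool :=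
  is_height (signed H sigma) && [forall v in S, sigma v].

Definition joint_w c H S sigma B : R :=
  (if admissible H S sigma then W c (signed H sigma) else 0) * bern_w (pe c) B.
Definition joint_Z c H S : R :=
  \sum_(sigma : {ffun V -> bool}) \sum_(B : {set E}) joint_w c H S sigma B.
Definition joint_prob c H S sigma B : R := joint_w c H S sigma B / joint_Z c H S.

Definition omega_law c H S (w : {set E}) : R :=
  \sum_(sigma : {ffun V -> bool}) \sum_(B : {set E})
     (if omega H sigma B == w then joint_prob c H S sigma B else 0).
Definition sign_omega_law c H S (sigma : {ffun V -> bool}) (w : {set E}) : R :=
  \sum_(B : {set E}) (if omega H sigma B == w then joint_prob c H S sigma B else 0).

End Graph.

(* Main.v *)
Require Import Defs.
From HB Require Import structures.
From mathcomp Require Import all_boot all_order all_algebra.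
From mathcomp Require Import zify ring lra.
Set Implicit Arguments. Unset Strict Implicit. Unset Printing Implicit Defensive.
Import Order.TTheory GRing.Theory Num.Theory.
Local Open Scope ring_scope.

Lemma card_const (V : finType) (r : rel V) :
  (forall x, r x x) -> (forall x y, r x y -> r y x) ->
  (forall x y z, r x y -> r y z -> r x z) ->
  #|[set sigma : {ffun V -> bool} |
      [forall x, forall y, r x y ==> (sigma x == sigma y)]]| =
  (2 ^ #|[set [set y | r x y] | x : V]|)%N.
Proof.
move=> rr rs rt.
set P := [set [set y | r x y] | x : V].
set C := [set sigma : {ffun V -> bool} | _].
have clsE : forall x y, r x y -> [set z | r x z] = [set z | r y z].
  move=> x y rxy; apply/setP => z; rewrite !inE.
  apply/idP/idP => [ryz|rxz]; [exact: rt (rs _ _ rxy) ryz | exact: rt rxy rxz].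
pose phi (sigma : {ffun V -> bool}) : {ffun {set V} -> bool} :=
  [ffun A : {set V} => [exists x in A, sigma x] && (A \in P)].
have Cc : forall sigma, sigma \in C -> forall x y, r x y -> sigma x = sigma y.
  by move=> sigma; rewrite inE => /forallP H x y rxy; move/forallP: (H x) => /(_ y) /implyP /(_ rxy) /eqP.
rewrite -card_bool -(card_pffun_on false P {: bool}).
rewrite -(card_in_imset (f := phi) (D := C)); last first.
  move=> s1 s2 H1 H2 E; apply/ffunP => x.
  have := congr1 (fun f : {ffun {set V} -> bool} => f [set y | r x y]) E; rewrite /= !ffunE.
  have xP : [set y | r x y] \in P by apply/imsetP; exists x.
  rewrite xP !andbT.
  have ex : forall s, s \in C -> [exists y in [set y | r x y], s y] = s x.
    move=> s sC; apply/existsP/idP => [[y /andP [] ]|sx].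
      by rewrite inE => rxy; rewrite (Cc _ sC _ _ rxy).
    by exists x; rewrite inE rr.
  by rewrite !ex.
apply: eq_card => f; apply/imsetP/pffun_onP => [[s sC ->] | [sup _]].
  split; last by move=> b _.
  apply/subsetP => A.
  by rewrite !inE ffunE; case: (A \in P); rewrite ?andbT ?andbF.
exists [ffun x => f [set y | r x y]].
  rewrite inE; apply/forallP => x; apply/forallP => y; apply/implyP => rxy.
  by rewrite !ffunE (clsE _ _ rxy).
apply/ffunP => A; rewrite ffunE.
case AP: (A \in P); last first.
  rewrite andbF; move: (subsetP sup A); rewrite !inE AP.
  by case: (f A) => // /(_ isT).
case/imsetP: AP => a _ ->; rewrite andbT.
apply/idP/existsP => [fa|[x /andP [] ]].
  by exists a; rewrite inE rr ffunE.
by rewrite inE ffunE => rax; rewrite (clsE _ _ rax).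
Qed.

Section Gen.
Variable R : realFieldType.

Lemma sum_set_prod (E : finType) (F : E -> bool -> R) :
  \sum_(B : {set E}) \prod_(e : E) F e (e \in B) =
  \prod_(e : E) (F e true + F e false).
Proof.
transitivity (\prod_(e : E) \sum_(b : bool) F e b); last first.
  by apply: eq_bigr => e _; rewrite big_bool.
rewrite [RHS]bigA_distr_bigA /=.
rewrite (reindex (fun f : {ffun E -> bool} => [set x | f x])) /=.
  by apply: eq_bigr => f _; apply: eq_bigr => e _; rewrite inE.
exists (fun B : {set E} => [ffun x => x \in B]) => [f _ | B _].
  by apply/ffunP => x; rewrite ffunE inE.
by apply/setP => x; rewrite inE ffunE.
Qed.

Lemma prod_if0 (E : finType) (P : pred E) (y : E -> R) :
  \prod_(e : E) (if P e then y e else 0) =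
  if [forall e, P e] then \prod_(e : E) y e else 0.
Proof.
case: ifP => [/forallP HP|/negbT]; first by apply: eq_bigr => e _; rewrite HP.
rewrite negb_forall => /existsP [e He].
by rewrite (bigD1 e) //= (negbTE He) mul0r.
Qed.

End Gen.

Section Comb.
Variables (V E : finType) (src dst : E -> V).

Lemma open_adj_sym w : symmetric (open_adj src dst w).
Proof.
move=> x y; apply/existsP/existsP => [] [e /andP [ew He]]; exists e;
  by rewrite ew /endsb orbC.
Qed.

Lemma oconn_sym w x y : oconn src dst w x y = oconn src dst w y x.
Proof. rewrite /oconn; exact: (sym_connect_sym (open_adj_sym w)). Qed.

Lemma oconn_trans w x y z : oconn src dst w x y -> oconn src dst w y z -> oconn src dst w x z.
Proof. exact: connect_trans. Qed.

Lemma oconn_refl w x : oconn src dst w x x.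
Proof. exact: connect0. Qed.

Lemma touchS_oconn S w x y : touchS src dst S w x -> oconn src dst w x y -> touchS src dst S w y.
Proof.
move=> /existsP [s /andP [sS xs]] xy; apply/existsP; exists s; rewrite sS /=.
by apply: oconn_trans xs; rewrite oconn_sym.
Qed.

Lemma touchS_S (S : {set V}) (w : {set E}) s : s \in S -> touchS src dst S w s.
Proof. by move=> sS; apply/existsP; exists s; rewrite sS oconn_refl. Qed.

Lemma wconn_refl S w x : wconn src dst S w x x.
Proof. by rewrite /wconn oconn_refl. Qed.

Lemma wconn_sym S w x y : wconn src dst S w x y -> wconn src dst S w y x.
Proof. by rewrite /wconn oconn_sym andbC. Qed.

Lemma wconn_trans S w x y z : wconn src dst S w x y -> wconn src dst S w y z -> wconn src dst S w x z.
Proof.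
rewrite /wconn => /orP [xy|/andP [tx ty]] /orP [yz|/andP [ty' tz]].
- by rewrite (oconn_trans xy yz).
- by rewrite tz (touchS_oconn ty' (_ : oconn src dst w y x)) ?orbT // oconn_sym.
- by rewrite tx (touchS_oconn ty yz) orbT.
- by rewrite tx tz orbT.
Qed.

Definition compat (sigma : {ffun V -> bool}) (w : {set E}) :=
  [forall e in w, sigma (src e) == sigma (dst e)].

Lemma compatP (sigma : {ffun V -> bool}) (w : {set E}) :
  reflect (forall x y, oconn src dst w x y -> sigma x = sigma y) (compat sigma w).
Proof.
apply: (iffP forallP) => [H x y xy | H e].
  have cl : closed (open_adj src dst w) [pred z | sigma z].
    move=> u v /existsP [e /andP [ew He]]; rewrite !inE.
    move/implyP: (H e) => /(_ ew) /eqP.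
    by case/orP: He => /andP [/eqP -> /eqP ->].
  by have := closed_connect cl xy; rewrite !inE.
apply/implyP => ew; apply/eqP/H; apply: connect1.
by apply/existsP; exists e; rewrite ew /endsb !eqxx.
Qed.

Lemma coin_setE (S : {set V}) (w : {set E}) (sigma : {ffun V -> bool}) :
  (sigma \in coin_set src dst S w) = compat sigma w && [forall s in S, sigma s].
Proof.
rewrite inE; apply/andP/andP => [[/forallP H1 /forallP H2]|[/compatP H1 /forallP H2]]; split.
- apply/compatP => x y xy.
  by move/forallP: (H1 x) => /(_ y) /implyP /(_ xy) /eqP.
- by apply/forallP => s; apply/implyP => sS; move/implyP: (H2 s); apply; exact: touchS_S.
- by apply/forallP => x; apply/forallP => y; apply/implyP => /H1 ->.
- apply/forallP => x; apply/implyP => /existsP [s /andP [sS xs]].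
  by rewrite (H1 _ _ xs); move/implyP: (H2 s); apply.
Qed.

Definition Const (r : rel V) := [set sigma : {ffun V -> bool} |
      [forall x, forall y, r x y ==> (sigma x == sigma y)]].

Lemma ConstP (r : rel V) (sigma : {ffun V -> bool}) :
  reflect (forall x y, r x y -> sigma x = sigma y) (sigma \in Const r).
Proof.
rewrite inE; apply: (iffP forallP) => [H x y rxy|H x].
  by move/forallP: (H x) => /(_ y) /implyP /(_ rxy) /eqP.
by apply/forallP => y; apply/implyP => /H ->.
Qed.

Lemma touchS0 w x : touchS src dst set0 w x = false.
Proof. by apply/existsP => [] [s]; rewrite inE. Qed.

Lemma coin_set0 w : coin_set src dst set0 w = Const (oconn src dst w).
Proof.
apply/setP => sigma; rewrite coin_setE.
apply/andP/ConstP => [[/compatP H _] //|H]; split; first exact/compatP.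
by apply/forallP => s; rewrite inE.
Qed.

Lemma card_coin_free w : (2 ^ ncomp src dst w)%N = #|coin_set src dst set0 w|.
Proof.
rewrite coin_set0 /Const card_const //; [exact: oconn_refl | | exact: oconn_trans].
by move=> x y; rewrite oconn_sym.
Qed.

Lemma card_coin (S : {set V}) (w : {set E}) :
  (2 ^ ncomp_wired src dst S w)%N =
  ((if S == set0 then 1 else 2) * #|coin_set src dst S w|)%N.
Proof.
rewrite /ncomp_wired -card_const; last 3 first.
- exact: wconn_refl.
- exact: wconn_sym.
- exact: wconn_trans.
case: (set_0Vmem S) => [->|[s0 s0S]].
  rewrite eqxx mul1n coin_set0; apply: eq_card => sigma.
  by rewrite !inE; apply: eq_forallb => x; apply: eq_forallb => y; rewrite /wconn touchS0 /= orbF.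
have -> : (S == set0) = false by apply/negbTE/set0Pn; exists s0.
pose C := Const (wconn src dst S w).
have Cl1 : forall sigma, (sigma \in C) && sigma s0 = (sigma \in coin_set src dst S w).
  move=> sigma; rewrite coin_setE.
  apply/andP/andP => [[/ConstP H1 H2]|[/compatP H1 /forallP H2]]; split.
  - by apply/compatP => x y xy; apply: H1; rewrite /wconn xy.
  - apply/forallP => s; apply/implyP => sS; rewrite (H1 s s0) //.
    by rewrite /wconn !touchS_S // orbT.
  - apply/ConstP => x y /orP [/H1 //|/andP [/existsP [s /andP [sS xs]] /existsP [s' /andP [sS' ys]]]].
    rewrite (H1 _ _ xs) (H1 _ _ ys).
    by move/implyP: (H2 s) => /(_ sS) ->; move/implyP: (H2 s') => /(_ sS') ->.
  - by move/implyP: (H2 s0); apply.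
pose neg (sigma : {ffun V -> bool}) := [ffun x => ~~ sigma x].
have negK : involutive neg by move=> s; apply/ffunP => x; rewrite !ffunE negbK.
have Cneg : forall sigma, (neg sigma \in C) = (sigma \in C).
  move=> sigma; apply/ConstP/ConstP => H x y rxy.
    by have := H x y rxy; rewrite !ffunE => /negb_inj.
  by rewrite !ffunE (H x y rxy).
rewrite -(cardID [pred s : {ffun V -> bool} | s s0] C).
have -> : #|[predI C & [pred s : {ffun V -> bool} | s s0]]| = #|coin_set src dst S w|.
  by apply: eq_card => s; rewrite -Cl1 !inE.
have -> : #|[predD C & [pred s : {ffun V -> bool} | s s0]]| = #|coin_set src dst S w|.
  rewrite -(card_preimset _ (inv_inj negK)).
  apply: eq_card => s; rewrite [in RHS]inE -Cl1 Cneg ffunE.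
  by rewrite [in LHS]inE andbC.
by rewrite mul2n addnn.
Qed.

End Comb.

Lemma odd_ge (a : int) : 0 < a -> odd `|a|%N -> a = 1 \/ 3 <= a.
Proof.
case: a => // n; rewrite absz_nat ltz_nat lez_nat => n0 on.
have : (n == 1)%N || (3 <= n)%N by case: n n0 on => // [[|[|]]].
by case/orP => [/eqP -> | ->]; [left | right].
Qed.

Section Main.
Variables (R : realFieldType) (V E : finType) (src dst : E -> V) (c : E -> R) (H : V -> int).
Hypotheses (c1 : forall e, 1 <= c e) (Hpos : positive_height src dst H).

Lemma Hgt0 v : 0 < H v.
Proof. by case/andP: Hpos => _ /forallP. Qed.

Lemma Hodd v : H v = 1 \/ 3 <= H v.
Proof.
apply: odd_ge; first exact: Hgt0.
by case/andP: Hpos => /andP [/forallP] .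
Qed.

Lemma Hdiff e : `|H (src e) - H (dst e)| <= 2.
Proof. by case/andP: Hpos => /andP [_ /forallP]. Qed.

Lemma E_fixE e : (e \in E_fix src dst H) = (3 <= Num.max (H (src e)) (H (dst e))).
Proof. by rewrite inE. Qed.

Lemma adm_E (S : {set V}) (sigma : {ffun V -> bool}) :
  admissible src dst H S sigma =
  [forall e in E_fix src dst H, sigma (src e) == sigma (dst e)] && [forall v in S, sigma v].
Proof.
rewrite /admissible /is_height.
have -> : [forall v, odd `|signed H sigma v|%N].
  apply/forallP => v; rewrite /signed; case: (sigma v); rewrite ?abszN;
  by case/andP: Hpos => /andP [/forallP].
rewrite /=; congr (_ && _); apply: eq_forallb => e.
rewrite E_fixE /signed.
have := Hgt0 (src e); have := Hgt0 (dst e); have := Hodd (src e); have := Hodd (dst e).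
have := Hdiff e.
case: (sigma (src e)); case: (sigma (dst e)) => /=; lia.
Qed.


Definition om (sigma : {ffun V -> bool}) (e : E) (b : bool) : bool :=
  let a := signed H sigma (src e) in let bb := signed H sigma (dst e) in
  if 3 <= Num.max `|a| `|bb| then true
  else if (a == bb) && (`|a| == 1) then b else false.

Lemma omega_mem sigma B e : (e \in omega src dst H sigma B) = om sigma e (e \in B).
Proof. by rewrite inE. Qed.

Definition bf (e : E) (b : bool) : R := if b then pe c e else 1 - pe c e.

Definition efac (sigma : {ffun V -> bool}) (w : {set E}) (e : E) : R :=
  (if signed H sigma (src e) == signed H sigma (dst e) then c e else 1) *
  ((if om sigma e true == (e \in w) then bf e true else 0) +
   (if om sigma e false == (e \in w) then bf e false else 0)).

Lemma sum_B (S : {set V}) sigma w :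
  \sum_(B : {set E}) (if omega src dst H sigma B == w then joint_w src dst c H S sigma B else 0) =
  (if admissible src dst H S sigma then \prod_e efac sigma w e else 0).
Proof.
rewrite /joint_w; case: ifP => adm; last by rewrite big1 // => B _; rewrite mul0r if_same.
transitivity (\sum_(B : {set E}) W src dst c (signed H sigma) *
   \prod_e (if om sigma e (e \in B) == (e \in w) then bf e (e \in B) else 0)).
  apply: eq_bigr => B _; rewrite prod_if0.
  have -> : [forall e, om sigma e (e \in B) == (e \in w)] = (omega src dst H sigma B == w).
    apply/forallP/eqP => [Hf|<- e]; last by rewrite omega_mem.
    by apply/setP => e; rewrite omega_mem; apply/eqP.
  by case: ifP; rewrite ?mulr0.
rewrite -mulr_sumr (sum_set_prod (fun e b => if om sigma e b == (e \in w) then bf e b else 0)).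
by rewrite /W -big_split.
Qed.

Lemma c_neq0 e : c e != 0.
Proof. by apply: lt0r_neq0; apply: lt_le_trans (c1 e). Qed.

Lemma efac_val sigma w e :
  efac sigma w e =
  if e \in E_fix src dst H then
    (if e \in w then (if (sigma (src e) == sigma (dst e)) && (H (src e) == H (dst e)) then c e else 1) else 0)
  else if sigma (src e) == sigma (dst e) then (if e \in w then c e - 1 else 1)
  else (if e \in w then 0 else 1).
Proof.
have cn := c_neq0 e.
rewrite /efac /om /bf /pe E_fixE /signed.
have := Hgt0 (src e); have := Hgt0 (dst e); have := Hodd (src e); have := Hodd (dst e).
have := Hdiff e.
move: (H (src e)) (H (dst e)) => hx hy.
case: (sigma (src e)); case: (sigma (dst e)) => /= Hd Oy Ox Py Px;
rewrite ?normrN (gtr0_norm Px) (gtr0_norm Py);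
(have Ne1 : (hx == - hy) = false by apply/negP => /eqP; lia);
(have Ne2 : (- hx == hy) = false by apply/negP => /eqP; lia);
rewrite ?Ne1 ?Ne2 /=;
(have [M|M] := boolP (3 <= Num.max hx hy); rewrite ?M ?(negbTE M); [| have [? ?] : hx = 1 /\ hy = 1 by lia]); subst; rewrite ?eqxx /=; case: (e \in w) => /=; repeat case: ifPn => /= ?; try (exfalso; lia); try (field; done).
Qed.


Definition Kc : R := \prod_e (if (e \in E_fix src dst H) && (H (src e) == H (dst e)) then c e else 1).
Definition Pw (w : {set E}) : R :=
  \prod_e (if (e \in w) && (e \notin E_fix src dst H) then c e - 1 else 1).

Lemma core (S : {set V}) sigma w :
 (if admissible src dst H S sigma then \prod_e efac sigma w e else 0) =
 (if (E_fix src dst H \subset w) && (sigma \in coin_set src dst S w) then Kc * Pw w else 0).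
Proof.
rewrite adm_E coin_setE.
case: (boolP [forall v in S, sigma v]) => Sc; last by rewrite !andbF.
rewrite !andbT.
case: (boolP (E_fix src dst H \subset w)) => Fw /=; last first.
  case: ifP => // _.
  have [e eF ew] : exists2 e, e \in E_fix src dst H & e \notin w.
    move/subsetPn: Fw => [e eF ew]; by exists e.
  by rewrite (bigD1 e) //= efac_val eF (negbTE ew) mul0r.
case: (boolP (compat src dst sigma w)) => Cw /=.
  have -> : [forall e in E_fix src dst H, sigma (src e) == sigma (dst e)].
    apply/forallP => e; apply/implyP => eF.
    by move/forallP: Cw => /(_ e) /implyP; apply; apply: (subsetP Fw).
  rewrite /Kc /Pw -big_split; apply: eq_bigr => e _; rewrite efac_val.
  case: (boolP (e \in E_fix src dst H)) => eF /=.
    rewrite (subsetP Fw _ eF) /=.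
    move/forallP: Cw => /(_ e) /implyP /(_ (subsetP Fw _ eF)) -> /=.
    by rewrite mulr1.
  case: (boolP (e \in w)) => ew /=.
    by move/forallP: Cw => /(_ e) /implyP /(_ ew) -> ; rewrite mul1r.
  by rewrite mulr1; case: ifP.
case: ifP => // /forallP FC.
move: Cw; rewrite negb_forall => /existsP [e]; rewrite negb_imply => /andP [ew ne].
rewrite (bigD1 e) //= efac_val ew (negbTE ne).
case: (boolP (e \in E_fix src dst H)) => eF /=; last by rewrite mul0r.
by move: (FC e); rewrite eF (negbTE ne).
Qed.


Lemma c_gt0 e : 0 < c e.
Proof. by apply: lt_le_trans (c1 e). Qed.

Lemma pe_ge0 e : 0 <= pe c e.
Proof. by rewrite /pe subr_ge0 invf_le1 ?c1 ?c_gt0. Qed.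

Lemma pe_lt1 e : 0 < 1 - pe c e.
Proof. by rewrite /pe opprB addrC subrK invr_gt0 c_gt0. Qed.

Lemma bern_ge0 B : 0 <= bern_w (pe c) B.
Proof.
apply: prodr_ge0 => e _; case: ifP => _; [exact: pe_ge0 | exact: ltW (pe_lt1 e)].
Qed.

Lemma W_gt0 h : 0 < W src dst c h.
Proof. by apply: prodr_gt0 => e _; case: ifP => _ //; exact: c_gt0. Qed.

Lemma jw_ge0 S sigma B : 0 <= joint_w src dst c H S sigma B.
Proof.
rewrite /joint_w; apply: mulr_ge0; last exact: bern_ge0.
by case: ifP => _ //; apply: ltW (W_gt0 _).
Qed.

Lemma Z_gt0 S : 0 < joint_Z src dst c H S.
Proof.
pose s0 : {ffun V -> bool} := [ffun _ => true].
have adm0 : admissible src dst H S s0.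
  rewrite adm_E; apply/andP; split; apply/forallP => x; apply/implyP => _;
  by rewrite !ffunE.
rewrite /joint_Z (bigD1 s0) //= (bigD1 set0) //=.
have p0 : 0 < joint_w src dst c H S s0 set0.
  rewrite /joint_w adm0; apply: mulr_gt0; first exact: W_gt0.
  apply: prodr_gt0 => e _; rewrite inE; exact: pe_lt1.
rewrite -addrA; apply: (lt_le_trans p0); rewrite lerDl.
apply: addr_ge0; apply: sumr_ge0 => ? _; last apply: sumr_ge0 => ? _; exact: jw_ge0.
Qed.

Lemma sign_omega_lawE S sigma w :
  sign_omega_law src dst c H S sigma w =
  (if (E_fix src dst H \subset w) && (sigma \in coin_set src dst S w) then Kc * Pw w else 0)
  / joint_Z src dst c H S.
Proof.
rewrite -core -sum_B /sign_omega_law mulr_suml; apply: eq_bigr => B _.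
by case: ifP; rewrite ?mul0r.
Qed.

Lemma omega_lawE S w :
  omega_law src dst c H S w =
  (if E_fix src dst H \subset w then #|coin_set src dst S w|%:R * (Kc * Pw w) else 0)
  / joint_Z src dst c H S.
Proof.
have -> : omega_law src dst c H S w = \sum_sigma sign_omega_law src dst c H S sigma w by [].
under eq_bigr do rewrite sign_omega_lawE.
rewrite -mulr_suml; case: ifP => Fw /=; last by rewrite big1.
by rewrite -big_mkcond sumr_const mulr_natl.
Qed.

Lemma sum_omega S : \sum_w omega_law src dst c H S w = 1.
Proof.
rewrite /omega_law exchange_big /=.
transitivity (\sum_sigma \sum_B joint_prob src dst c H S sigma B).
  apply: eq_bigr => sigma _; rewrite exchange_big /=; apply: eq_bigr => B _.
  rewrite -big_mkcond /=.
  rewrite (eq_bigl (fun w => w == omega src dst H sigma B)) ?big_pred1_eq //.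
rewrite /joint_prob -(divff (lt0r_neq0 (Z_gt0 S))) mulr_suml.
by apply: eq_bigr => sigma _; rewrite mulr_suml.
Qed.


Definition Cfix : R := (\prod_e (c e)^-1) * \prod_e (if e \in E_fix src dst H then c e - 1 else 1).

Lemma bernE (w : {set E}) : E_fix src dst H \subset w -> bern_w (pe c) w = Cfix * Pw w.
Proof.
move=> Fw; rewrite /Cfix /Pw -!big_split /=; apply: eq_bigr => e _.
have cn := c_neq0 e; rewrite /pe.
case: (boolP (e \in E_fix src dst H)) => eF /=.
  by rewrite (subsetP Fw _ eF) /=; field.
by case: (e \in w) => /=; field.
Qed.

Definition fS (S : {set V}) (w : {set E}) : R :=
  if E_fix src dst H \subset w then #|coin_set src dst S w|%:R * Pw w else 0.

Lemma FK_condE (nc : {set E} -> nat) (S : {set V}) (d : nat)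
  (hnc : forall w, (2 ^ nc w)%N = (d * #|coin_set src dst S w|)%N) w :
  FK_cond nc (pe c) (E_fix src dst H) w =
  (d%:R * Cfix / ((\sum_(w' : {set E}) FK_weight nc (pe c) w') *
     FK_event_prob nc (pe c) (E_fix src dst H))) * fS S w.
Proof.
rewrite /FK_cond /fS /FK_prob /FK_weight; case: ifP => Fw; last by rewrite !mul0r mulr0.
rewrite bernE // -natrX hnc natrM invfM; ring.
Qed.


Lemma sum_FK (nc : {set E} -> nat) :
  0 < FK_event_prob nc (pe c) (E_fix src dst H) ->
  \sum_w FK_cond nc (pe c) (E_fix src dst H) w = 1.
Proof.
move=> EP; rewrite /FK_cond -mulr_suml -big_mkcond /=.
by rewrite divff // lt0r_neq0.
Qed.

Lemma omega_fS S w :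
  omega_law src dst c H S w = (Kc / joint_Z src dst c H S) * fS S w.
Proof.
rewrite omega_lawE /fS; case: ifP => _; last by rewrite !mul0r mulr0.
ring.
Qed.

End Main.

Lemma prop_eq (R : realFieldType) (T : finType) (a b f : T -> R) (al be : R) :
  (forall t, a t = al * f t) -> (forall t, b t = be * f t) ->
  \sum_t a t = 1 -> \sum_t b t = 1 -> forall t, a t = b t.
Proof.
move=> ha hb sa sb t.
have sa' : al * \sum_t f t = 1 by rewrite mulr_sumr -sa; apply: eq_bigr => ? _; rewrite ha.
have sb' : be * \sum_t f t = 1 by rewrite mulr_sumr -sb; apply: eq_bigr => ? _; rewrite hb.
have nz : \sum_t f t != 0 by apply/eqP => z; move: sa'; rewrite z mulr0 => /eqP; rewrite eq_sym oner_eq0.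
have : al = be by apply: (mulIf nz); rewrite sa' sb'.
by move=> e; rewrite ha hb e.
Qed.

Unset Implicit Arguments.
Set Strict Implicit.

Theorem corollary2p5 (R : realFieldType) (V E : finType) (src dst : E -> V)
    (c : E -> R) (H : V -> int) :
  simple_graph src dst -> connected_graph src dst ->
  (forall e, 1 <= c e) -> positive_height src dst H ->
  (* free case: h among all height functions with |h| = H *)
  ((0 < FK_event_prob (ncomp src dst) (pe c) (E_fix src dst H) ->
    forall w : {set E},
      omega_law src dst c H set0 w =
      FK_cond (ncomp src dst) (pe c) (E_fix src dst H) w)
   /\
   (forall (w : {set E}) (sigma : {ffun V -> bool}),
      0 < omega_law src dst c H set0 w ->
      sign_omega_law src dst c H set0 sigma w / omega_law src dst c H set0 w =
      coin_law src dst R set0 w sigma))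
  /\
  (* wired case: additionally sign(h) = +1 on S *)
  (forall S : {set V},
   (0 < FK_event_prob (ncomp_wired src dst S) (pe c) (E_fix src dst H) ->
    forall w : {set E},
      omega_law src dst c H S w =
      FK_cond (ncomp_wired src dst S) (pe c) (E_fix src dst H) w)
   /\
   (forall (w : {set E}) (sigma : {ffun V -> bool}),
      0 < omega_law src dst c H S w ->
      sign_omega_law src dst c H S sigma w / omega_law src dst c H S w =
      coin_law src dst R S w sigma)).
Proof.
move=> _ _ c1 Hpos.
have part2 : forall S w sigma, 0 < omega_law src dst c H S w ->
      sign_omega_law src dst c H S sigma w / omega_law src dst c H S w =
      coin_law src dst R S w sigma.
  move=> S w sigma; rewrite (omega_lawE c1 Hpos) (sign_omega_lawE c1 Hpos) /coin_law.
  case: ifP => Fw /=; last by rewrite mul0r ltxx.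
  move=> pos; have := lt0r_neq0 pos.
  rewrite !mulf_eq0 !negb_or invr_eq0 => /andP [/andP [nC /andP [nK nP]] nZ].
  case: ifP => _; last by rewrite !mul0r.
  by field; rewrite nC nK nP nZ.
split; split.
- move=> EP w; eapply prop_eq.
  + by move=> t; apply: (omega_fS c1 Hpos).
  + by move=> t; apply: (FK_condE H c1 (d := 1)) => w'; rewrite mul1n card_coin_free.
  + exact: sum_omega c1 Hpos set0.
  + exact: sum_FK EP.
- by move=> w sigma; apply: part2.
- move=> EP w; eapply prop_eq.
  + by move=> t; apply: (omega_fS c1 Hpos).
  + by move=> t; apply: (FK_condE H c1 (d := if S == set0 then 1%N else 2%N)) => w'; rewrite card_coin.
  + exact: sum_omega c1 Hpos S.
  + exact: sum_FK EP.
- by move=> w sigma; apply: part2.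
Qed.
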